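(* Let $k$ be a real division algebra, $\mathcal Z\subset k$ a discrete subring closed under conjugation, $(a_n)_{n\ge1}$ a sequence in $\mathcal Z$ and $x_0\in k$ with $x_n=T_{a_n}\cdots T_{a_1}x_0$ defined and $\|x_n\|<1$ for all $n\ge0$. Then for each $n$, \[\|T^{-1}_{a_1}\cdots T^{-1}_{a_n}0-x_0\|=\prod_{i=0}^n\|x_i\|\;\prod_{i=0}^{n-1}\|T^{-1}_{a_{i+1}}\cdots T^{-1}_{a_n}0\|,\] assuming the terms of the latter product are well-defined.
   Context: $k\in\{\mathbb{R},\mathbb{C},\mathbb{H},\mathbb{O}\}$, identified with $\mathbb{R}^d$ with Euclidean norm $\|x\|^2=x\overline x$. For $a\in\mathcal Z$, $T_ax=x^{-1}-a$ and $T_a^{-1}x=(x+a)^{-1}$. Discrete means discrete in $\mathbb{R}^d$. *)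

(* Defs.v *)
From Stdlib Require Import Reals.
Open Scope R_scope.

(* The real division algebras R, C, H, O are realised as the Cayley-Dickson
   algebras CD 0, CD 1, CD 2, CD 3 (dimension d = 2^m), carried by R^(2^m)
   with the Euclidean norm. *)
Fixpoint CD (m : nat) : Type :=
  match m with
  | O => R
  | S m' => (CD m' * CD m')%type
  end.

Fixpoint cd_zero (m : nat) : CD m :=
  match m return CD m with
  | O => 0
  | S m' => (cd_zero m', cd_zero m')
  end.

Fixpoint cd_one (m : nat) : CD m :=
  match m return CD m with
  | O => 1
  | S m' => (cd_one m', cd_zero m')
  end.

Fixpoint cd_add (m : nat) : CD m -> CD m -> CD m :=
  match m return CD m -> CD m -> CD m with
  | O => Rplus
  | S m' => fun x y => (cd_add m' (fst x) (fst y), cd_add m' (snd x) (snd y))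
  end.

Fixpoint cd_opp (m : nat) : CD m -> CD m :=
  match m return CD m -> CD m with
  | O => Ropp
  | S m' => fun x => (cd_opp m' (fst x), cd_opp m' (snd x))
  end.

Definition cd_sub (m : nat) (x y : CD m) : CD m := cd_add m x (cd_opp m y).

Fixpoint cd_scale (m : nat) (r : R) : CD m -> CD m :=
  match m return CD m -> CD m with
  | O => fun x => r * x
  | S m' => fun x => (cd_scale m' r (fst x), cd_scale m' r (snd x))
  end.

Fixpoint cd_conj (m : nat) : CD m -> CD m :=
  match m return CD m -> CD m with
  | O => fun x => x
  | S m' => fun x => (cd_conj m' (fst x), cd_opp m' (snd x))
  end.

(* Cayley-Dickson product: (a,b)(c,d) = (ac - conj(d) b, d a + b conj(c)) *)
Fixpoint cd_mul (m : nat) : CD m -> CD m -> CD m :=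
  match m return CD m -> CD m -> CD m with
  | O => Rmult
  | S m' => fun x y =>
      (cd_sub m' (cd_mul m' (fst x) (fst y)) (cd_mul m' (cd_conj m' (snd y)) (snd x)),
       cd_add m' (cd_mul m' (snd y) (fst x)) (cd_mul m' (snd x) (cd_conj m' (fst y))))
  end.

(* squared Euclidean norm = x conj(x) *)
Fixpoint cd_normsq (m : nat) : CD m -> R :=
  match m return CD m -> R with
  | O => fun x => x * x
  | S m' => fun x => cd_normsq m' (fst x) + cd_normsq m' (snd x)
  end.

Definition cd_norm (m : nat) (x : CD m) : R := sqrt (cd_normsq m x).

(* multiplicative inverse x^{-1} = conj(x) / ||x||^2 (meaningful for x <> 0) *)
Definition cd_inv (m : nat) (x : CD m) : CD m :=
  cd_scale m (/ cd_normsq m x) (cd_conj m x).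

Definition Tmap (m : nat) (a x : CD m) : CD m := cd_sub m (cd_inv m x) a.
Definition Tinvmap (m : nat) (a x : CD m) : CD m := cd_inv m (cd_add m x a).

(* backw m a i k = T^{-1}_{a_{i+1}} ... T^{-1}_{a_{i+k}} 0 ;
   so T^{-1}_{a_{i+1}} ... T^{-1}_{a_n} 0 = backw m a i (n - i). *)
Fixpoint backw (m : nat) (a : nat -> CD m) (i k : nat) : CD m :=
  match k with
  | O => cd_zero m
  | S k' => Tinvmap m (a (S i)) (backw m a (S i) k')
  end.

Fixpoint prodR (f : nat -> R) (n : nat) : R :=
  match n with
  | O => 1
  | S n' => prodR f n' * f n'
  end.

Definition is_subring (m : nat) (Z : CD m -> Prop) : Prop :=
  Z (cd_zero m) /\ Z (cd_one m) /\
  (forall x y, Z x -> Z y -> Z (cd_add m x y)) /\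
  (forall x, Z x -> Z (cd_opp m x)) /\
  (forall x y, Z x -> Z y -> Z (cd_mul m x y)).

Definition is_discrete (m : nat) (Z : CD m -> Prop) : Prop :=
  forall z, Z z -> exists eps, 0 < eps /\
    forall w, Z w -> cd_norm m (cd_sub m w z) < eps -> w = z.

(* Main.v *)
Require Import Defs.
From Stdlib Require Import Reals Lra Lia.
Open Scope R_scope.

Fixpoint cd_dot (m : nat) : CD m -> CD m -> R :=
  match m return CD m -> CD m -> R with
  | O => fun x y => x * y
  | S m' => fun x y => cd_dot m' (fst x) (fst y) + cd_dot m' (snd x) (snd y)
  end.

Lemma normsq_dot m (x : CD m) : cd_normsq m x = cd_dot m x x.
Proof. induction m; simpl; intros; [ring | rewrite !IHm; ring]. Qed.

Lemma dot_sym m (x y : CD m) : cd_dot m x y = cd_dot m y x.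
Proof. induction m; simpl; intros; [ring | rewrite (IHm (fst x)), (IHm (snd x)); ring]. Qed.

Lemma dot_addl m (x y z : CD m) : cd_dot m (cd_add m x y) z = cd_dot m x z + cd_dot m y z.
Proof. induction m; simpl; intros; [ring | rewrite !IHm; ring]. Qed.

Lemma dot_oppl m (x z : CD m) : cd_dot m (cd_opp m x) z = - cd_dot m x z.
Proof. induction m; simpl; intros; [ring | rewrite !IHm; ring]. Qed.

Lemma dot_scalel m r (x z : CD m) : cd_dot m (cd_scale m r x) z = r * cd_dot m x z.
Proof. induction m; simpl; intros; [ring | rewrite !IHm; ring]. Qed.

Lemma dot_conj m (x y : CD m) : cd_dot m (cd_conj m x) (cd_conj m y) = cd_dot m x y.
Proof.
  induction m; simpl; intros; [ring | rewrite IHm, dot_oppl, (dot_sym m (snd x)), dot_oppl, (dot_sym m (snd y)); ring].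
Qed.

Lemma dot_scaler m r (x z : CD m) : cd_dot m z (cd_scale m r x) = r * cd_dot m z x.
Proof. rewrite dot_sym, dot_scalel, dot_sym; reflexivity. Qed.

Lemma dot_addr m (x y z : CD m) : cd_dot m z (cd_add m x y) = cd_dot m z x + cd_dot m z y.
Proof. rewrite !(dot_sym m z), dot_addl; reflexivity. Qed.

Lemma dot_oppr m (x z : CD m) : cd_dot m z (cd_opp m x) = - cd_dot m z x.
Proof. rewrite !(dot_sym m z), dot_oppl; reflexivity. Qed.

Lemma normsq_sub m (x y : CD m) :
  cd_normsq m (cd_sub m x y) = cd_normsq m x + cd_normsq m y - 2 * cd_dot m x y.
Proof.
  unfold cd_sub. rewrite !normsq_dot, dot_addl, !dot_addr, !dot_oppl, !dot_oppr.
  rewrite (dot_sym m y x). ring.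
Qed.

Lemma normsq_ge0 m (x : CD m) : 0 <= cd_normsq m x.
Proof. induction m; simpl; intros; [nra | pose proof (IHm (fst x)); pose proof (IHm (snd x)) ; lra]. Qed.

Lemma normsq_eq0 m (x : CD m) : cd_normsq m x = 0 -> x = cd_zero m.
Proof.
  induction m; simpl; intros.
  - nra.
  - destruct x as [p q]; simpl in *.
    pose proof (normsq_ge0 m p); pose proof (normsq_ge0 m q).
    rewrite (IHm p), (IHm q); auto; lra.
Qed.

Lemma normsq_scale m r (x : CD m) : cd_normsq m (cd_scale m r x) = r * r * cd_normsq m x.
Proof. rewrite !normsq_dot, dot_scalel, dot_scaler; ring. Qed.

Lemma normsq_conj m (x : CD m) : cd_normsq m (cd_conj m x) = cd_normsq m x.
Proof. rewrite !normsq_dot, dot_conj; ring. Qed.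

Lemma conj_scale m r (x : CD m) : cd_conj m (cd_scale m r x) = cd_scale m r (cd_conj m x).
Proof.
  induction m; simpl; intros; [reflexivity|].
  rewrite IHm. f_equal. clear IHm. generalize (snd x). clear x.
  induction m; simpl; intros; [ring| rewrite !IHm; reflexivity].
Qed.

Lemma opp_opp m (x : CD m) : cd_opp m (cd_opp m x) = x.
Proof. induction m; simpl; intros; [ring | rewrite !IHm; destruct x; reflexivity]. Qed.

Lemma conj_conj m (x : CD m) : cd_conj m (cd_conj m x) = x.
Proof. induction m; simpl; intros; [reflexivity | rewrite IHm, opp_opp; destruct x; reflexivity]. Qed.

Lemma scale_scale m r s (x : CD m) : cd_scale m r (cd_scale m s x) = cd_scale m (r * s) x.
Proof. induction m; simpl; intros; [ring | rewrite !IHm; reflexivity]. Qed.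

Lemma scale_1 m (x : CD m) : cd_scale m 1 x = x.
Proof. induction m; simpl; intros; [ring | rewrite !IHm; destruct x; reflexivity]. Qed.

Lemma normsq_inv m (x : CD m) : cd_normsq m x <> 0 ->
  cd_normsq m (cd_inv m x) = / cd_normsq m x.
Proof. intros H. unfold cd_inv. rewrite normsq_scale, normsq_conj. field. auto. Qed.

Lemma inv_inv m (x : CD m) : cd_normsq m x <> 0 -> cd_inv m (cd_inv m x) = x.
Proof.
  intros H. unfold cd_inv at 1. rewrite (normsq_inv m x H).
  unfold cd_inv. rewrite conj_scale, conj_conj, scale_scale.
  replace (/ / cd_normsq m x * / cd_normsq m x) with 1 by (field; auto).
  apply scale_1.
Qed.

Lemma add_sub_cancel m (p a : CD m) : cd_add m (cd_sub m p a) a = p.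
Proof.
  unfold cd_sub. induction m; simpl; intros; [ring|].
  rewrite !IHm; destruct p; reflexivity.
Qed.

Lemma sub_add_add m (p q a : CD m) :
  cd_sub m (cd_add m p a) (cd_add m q a) = cd_sub m p q.
Proof.
  unfold cd_sub. induction m; simpl; intros; [ring|].
  rewrite !IHm; reflexivity.
Qed.

Lemma normsq_inv_sub m (u v : CD m) : cd_normsq m u <> 0 -> cd_normsq m v <> 0 ->
  cd_normsq m (cd_sub m (cd_inv m u) (cd_inv m v)) =
  cd_normsq m (cd_sub m u v) * cd_normsq m (cd_inv m u) * cd_normsq m (cd_inv m v).
Proof.
  intros Hu Hv.
  rewrite !normsq_sub, (normsq_inv m u Hu), (normsq_inv m v Hv).
  unfold cd_inv. rewrite dot_scalel, dot_scaler, dot_conj.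
  field; auto.
Qed.

Lemma norm_inv_sub m (u v : CD m) : cd_normsq m u <> 0 -> cd_normsq m v <> 0 ->
  cd_norm m (cd_sub m (cd_inv m u) (cd_inv m v)) =
  cd_norm m (cd_sub m u v) * cd_norm m (cd_inv m u) * cd_norm m (cd_inv m v).
Proof.
  intros Hu Hv. unfold cd_norm. rewrite normsq_inv_sub by auto.
  rewrite !sqrt_mult; auto using normsq_ge0.
  apply Rmult_le_pos; apply normsq_ge0.
Qed.

Theorem lemma1p4 (m : nat) (hm : (m <= 3)%nat)
  (Z : CD m -> Prop) (hZ : is_subring m Z)
  (hZconj : forall z, Z z -> Z (cd_conj m z))
  (hZdisc : is_discrete m Z)
  (a : nat -> CD m) (ha : forall n, (1 <= n)%nat -> Z (a n))
  (x0 : CD m) (x : nat -> CD m)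
  (hx0 : x O = x0)
  (hxrec : forall n, x (S n) = Tmap m (a (S n)) (x n))
  (hxdef : forall n, x n <> cd_zero m)
  (hxlt : forall n, cd_norm m (x n) < 1)
  (n : nat)
  (hdef : forall j, (j < n)%nat ->
     cd_add m (backw m a (S j) (n - S j)) (a (S j)) <> cd_zero m) :
  cd_norm m (cd_sub m (backw m a O n) x0) =
    prodR (fun i => cd_norm m (x i)) (S n) *
    prodR (fun i => cd_norm m (backw m a i (n - i))) n.
Proof.
  set (y := fun i => backw m a i (n - i)).
  set (P := fun i => cd_norm m (cd_sub m (y i) (x i))).
  assert (Hstep : forall i, (i < n)%nat ->
    P i = cd_norm m (x i) * cd_norm m (y i) * P (S i)).
  { intros i Hi. unfold P, y.
    replace (n - i)%nat with (S (n - S i)) by lia. simpl backw.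
    set (yy := backw m a (S i) (n - S i)).
    assert (Hxi : x i = cd_inv m (cd_add m (x (S i)) (a (S i)))).
    { rewrite hxrec. unfold Tmap. rewrite add_sub_cancel, inv_inv; auto.
      intro E. apply (hxdef i). apply normsq_eq0; auto. }
    assert (Hv : cd_normsq m (cd_add m (x (S i)) (a (S i))) <> 0).
    { rewrite hxrec. unfold Tmap. rewrite add_sub_cancel. intro E.
      rewrite normsq_inv in E. 2:{ intro E'. apply (hxdef i). apply normsq_eq0; auto. }
      pose proof (normsq_ge0 m (x i)).
      assert (cd_normsq m (x i) <> 0) by (intro E'; apply (hxdef i); apply normsq_eq0; auto).
      apply Rinv_neq_0_compat in H0. auto. }
    assert (Hu : cd_normsq m (cd_add m yy (a (S i))) <> 0).
    { intro E. apply (hdef i Hi). apply normsq_eq0; auto. }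
    rewrite Hxi. unfold Tinvmap. rewrite norm_inv_sub by auto.
    rewrite sub_add_add. ring. }
  assert (Hbase : P n = cd_norm m (x n)).
  { unfold P, y. rewrite Nat.sub_diag. simpl backw. unfold cd_norm.
    rewrite normsq_sub. replace (cd_normsq m (cd_zero m)) with 0.
    2:{ clear. induction m; simpl; [ring| rewrite <- IHm; ring]. }
    replace (cd_dot m (cd_zero m) (x n)) with 0. 1: f_equal; ring.
    clear. generalize (x n). clear -m. induction m; simpl; intros; [ring| rewrite <- !IHm; ring]. }
  assert (Hgen : forall i, (i <= n)%nat ->
    P O = prodR (fun i => cd_norm m (x i)) i * prodR (fun i => cd_norm m (y i)) i * P i).
  { induction i; intros Hi.
    - simpl; ring.
    - rewrite IHi by lia. rewrite Hstep by lia. simpl. ring. }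
  rewrite <- hx0. replace (cd_norm m (cd_sub m (backw m a 0 n) (x 0%nat))) with (P O)
    by (unfold P, y; rewrite Nat.sub_0_r; reflexivity).
  change (P O = prodR (fun i => cd_norm m (x i)) (S n) *
    prodR (fun i => cd_norm m (y i)) n).
  rewrite (Hgen n) by lia. rewrite Hbase. simpl. ring.
Qed.
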